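(* For every pair of positive integers $g,k$, every graph $G_{g,k}$ obtained by the construction described in the context has girth at least $g$.
   Context: Hypergraph notions. A closed walk of length $\ell$ in a hypergraph $H$ is a sequence $v_0F_0v_1F_1\ldots F_{\ell-1}v_0$ with $v_i,v_{i+1}\in F_i$ for all $0\le i<\ell$ (indices mod $\ell$), $F_i\ne F_{i+1}$ for all $i$ (indices mod $\ell$), and $v_1,\ldots,v_{\ell-1}$ pairwise distinct. An $r$-uniform hypergraph $H$ is tranquil, witnessed by labellings $\lambda=\{\lambda_F\}_{F\in E(H)}$ with $\lambda_F:F\to\{1,\dots,r\}$, if for every closed walk $W=v_0F_0\ldots F_{\ell-1}v_0$ the multigraph on $\{1,\dots,r\}$ with edge multiset $\{\lambda_{F_i}(v_i)\lambda_{F_i}(v_{i+1}):0\le i<\ell\}$ is bridgeless. The chromatic number of a hypergraph is the least number of colours in a vertex colouring with no monochromatic hyperedge; its girth is the length of a shortest Berge cycle (distinct hyperedges $F_1,\dots,F_\ell$ and distinct vertices $x_1,\dots,x_\ell$ with $x_i\in F_i\cap F_{i+1}$, indices mod $\ell$). Construction. Fix a positive integer $g$. $G_{g,1}$ is a single vertex. For $k\ge 2$, given a graph $G_{g,k-1}$ obtained by the construction, with vertex set identified with $\{1,\dots,r\}$, take a finite tranquil $r$-uniform hypergraph $H$ with chromatic number at least $k$ and girth at least $\lceil g/3\rceil$, together with tranquility-witnessing labellings $\lambda_F$, each $\lambda_F:F\to\{1,\dots,r\}$ a bijection. The graph $G_{g,k}$ consists of an independent set $T$ with a bijection $\nu:T\to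 V(H)$, together with, for each hyperedge $F\in E(H)$, a disjoint copy $G_F$ of $G_{g,k-1}$; for each $F\in E(H)$ one adds the perfect matching between $G_F$ and $\nu^{-1}(F)$ joining the vertex of $G_F$ corresponding to $i\in\{1,\dots,r\}$ to the vertex $t\in\nu^{-1}(F)$ with $\lambda_F(\nu(t))=i$. No other edges are present. The girth of a graph is the length of its shortest cycle (infinite if acyclic). *)

(* Defs.v *)
From mathcomp Require Import all_boot.
Set Implicit Arguments. Unset Strict Implicit. Unset Printing Implicit Defensive.

Definition girth_ge (T : finType) (e : rel T) (g : nat) : Prop :=
  forall (l : nat) (c : 'I_l -> T),
    3 <= l -> injective c -> (forall i, e (c i) (c (ordS i))) -> g <= l.

(* ---------- Hypergraphs ----------
   A hypergraph on the finite vertex type V is given by a finite type E of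
   hyperedge names together with an injective map [edge : E -> {set V}]
   (so the hyperedges form a set of subsets of V). *)

Definition uniform (V E : finType) (edge : E -> {set V}) (r : nat) : Prop :=
  forall F : E, #|edge F| = r.

Definition proper_colouring (V E : finType) (edge : E -> {set V}) (m : nat)
  (c : V -> 'I_m) : Prop :=
  forall F : E, ~ (exists a : 'I_m, forall v, v \in edge F -> c v = a).

Definition hchi_ge (V E : finType) (edge : E -> {set V}) (k : nat) : Prop :=
  forall m, m < k -> ~ exists c : V -> 'I_m, proper_colouring edge c.

Definition berge_cycle (V E : finType) (edge : E -> {set V}) (l : nat)
  (Fs : 'I_l -> E) (xs : 'I_l -> V) : Prop :=
  [/\ 2 <= l, injective Fs, injective xs &
      forall i, xs i \in edge (Fs i) /\ xs i \in edge (Fs (ordS i))].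

Definition hgirth_ge (V E : finType) (edge : E -> {set V}) (m : nat) : Prop :=
  forall l Fs xs, @berge_cycle V E edge l Fs xs -> m <= l.

(* Closed walk v_0 F_0 v_1 F_1 ... F_{l-1} v_0 of length l. *)
Definition closed_walk (V E : finType) (edge : E -> {set V}) (l : nat)
  (vs : 'I_l -> V) (Fs : 'I_l -> E) : Prop :=
  [/\ forall i, vs i \in edge (Fs i),
      forall i, vs (ordS i) \in edge (Fs i),
      forall i, Fs i != Fs (ordS i) &
      forall i j : 'I_l, 0 < i -> 0 < j -> vs i = vs j -> i = j].

(* Multigraphs on a finite type, given by the list of their edges
   (an edge is a pair of endpoints, loops allowed, read unordered). *)
Definition mg_adj (L : finType) (s : seq (L * L)) : rel L :=
  fun x y => ((x, y) \in s) || ((y, x) \in s).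

Definition bridgeless (L : finType) (s : seq (L * L)) : Prop :=
  forall p, p \in s -> connect (mg_adj (rem p s)) p.1 p.2.

Definition walk_label_edges (V E L : finType) (lam : E -> V -> L) (l : nat)
  (vs : 'I_l -> V) (Fs : 'I_l -> E) : seq (L * L) :=
  [seq (lam (Fs i) (vs i), lam (Fs i) (vs (ordS i))) | i <- enum 'I_l].

(* tranquility witnessed by the labellings lam_F : F -> L (only the values
   on F matter). *)
Definition tranquil_by (V E L : finType) (edge : E -> {set V})
  (lam : E -> V -> L) : Prop :=
  forall l vs Fs, @closed_walk V E edge l vs Fs ->
    bridgeless (walk_label_edges lam vs Fs).

Definition labels_bijective (V E L : finType) (edge : E -> {set V})
  (lam : E -> V -> L) : Prop :=
  forall F : E, {in edge F &, injective (lam F)} /\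
                (forall a : L, exists2 v, v \in edge F & lam F v = a).

(* ---------- The construction step ----------
   Vertex set: V (the independent set T, nu = identity) plus, for each
   hyperedge F, a copy {F} x T0 of G_{g,k-1}. *)
Definition step_graph (T0 V E : finType) (e0 : rel T0) (edge : E -> {set V})
  (lam : E -> V -> T0) : rel (V + (E * T0)) :=
  fun x y =>
    match x, y with
    | inl _, inl _ => false
    | inr (F, a), inr (F', b) => (F == F') && e0 a b
    | inl t, inr (F, a) => (t \in edge F) && (lam F t == a)
    | inr (F, a), inl t => (t \in edge F) && (lam F t == a)
    end.

Inductive constructed (g : nat) : nat -> forall T : finType, rel T -> Prop :=
  | constr_base (T : finType) (e : rel T) :
      #|T| = 1 -> (forall x y, e x y = false) -> constructed g 1 e
  | constr_step (k : nat) (T0 : finType) (e0 : rel T0)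
      (V E : finType) (edge : E -> {set V}) (lam : E -> V -> T0)
      (T : finType) (e : rel T) (f : T -> V + (E * T0)) :
      constructed g k e0 ->
      injective edge ->
      uniform edge #|T0| ->
      hchi_ge edge k.+1 ->
      hgirth_ge edge ((g + 2) %/ 3) ->
      tranquil_by edge lam ->
      labels_bijective edge lam ->
      bijective f ->
      (forall x y, e x y = step_graph e0 edge lam (f x) (f y)) ->
      constructed g k.+1 e.

(* Main.v *)
Require Import Defs.
From mathcomp Require Import all_boot zify.
Set Implicit Arguments. Unset Strict Implicit. Unset Printing Implicit Defensive.

Lemma berge_extract (V E : finType) (edge : E -> {set V}) n :
  hgirth_ge edge n ->
  forall m (F : nat -> E) (x : nat -> V), 0 < m ->
  (forall i j, i < m -> j < m -> x i = x j -> i = j) ->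
  (forall i, i < m -> F i != F (i.+1 %% m)) ->
  (forall i, i < m -> x i \in edge (F i) /\ x i \in edge (F (i.+1 %% m))) ->
  n <= m.
Proof.
move=> hg m; elim/ltn_ind: m => m IH F x m0 xinj Fne Fmem.
case: (boolP [forall i : 'I_m, forall j : 'I_m, (F i == F j) ==> (i == j)]) => [/forallP Finj | ].
- have m2 : 1 < m.
    case: m IH m0 xinj Fne Fmem Finj => [|[|m]] //= _ _ _ Fne _ _.
    by have := Fne 0 isT; rewrite modnn eqxx.
  apply: (hg m (fun i : 'I_m => F i) (fun i : 'I_m => x i)); split => //.
  + move=> i j /eqP Fij; apply/eqP; exact: (implyP (forallP (Finj i) j) Fij).
  + move=> i j xij; apply: val_inj; exact: xinj (ltn_ord i) (ltn_ord j) xij.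
  + move=> i; exact: Fmem (ltn_ord i).
- rewrite negb_forall => /existsP [i]; rewrite negb_forall => /existsP [j].
  rewrite negb_imply => /andP [/eqP Fij ij].
  have [i' [j' [Fij' ltij jm]]] : exists i' j', [/\ F i' = F j', i' < j' & j' < m].
    case: (ltngtP i j) => h.
    + by exists i, j; split.
    + by exists j, i; split.
    + by move: ij; rewrite (val_inj h) eqxx.
  have key : forall k, k < j' - i' -> F (i' + (k.+1 %% (j' - i'))) = F ((i' + k).+1 %% m).
    move=> k hk; case: (ltngtP k.+1 (j' - i')) => h.
    + rewrite (modn_small h) (modn_small (_ : (i'+k).+1 < m)); [by rewrite addnS | lia].
    + lia.
    + rewrite h modnn addn0 Fij' (_ : (i'+k).+1 = j'); [by rewrite modn_small | lia].
  apply: leq_trans (IH (j' - i') _ (fun k => F (i' + k)) (fun k => x (i' + k)) _ _ _ _) _.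
  + lia.
  + lia.
  + move=> a b ha hb /xinj h; have := h ltac:(lia) ltac:(lia); lia.
  + move=> k hk /=; rewrite key //; apply: Fne; lia.
  + move=> k hk /=; rewrite key //; apply: Fmem; lia.
  + lia.
Qed.
Lemma enum_positions (P : pred nat) L : P 0 -> 0 < L ->
  exists m (p : nat -> nat), [/\ 0 < m, p 0 = 0, p m = L,
    (forall j, j < m -> p j < p j.+1) & (forall j, j < m -> P (p j))] /\
    (forall i, i < L -> P i -> exists2 j, j < m & p j = i).
Proof.
move=> P0 L0.
set S := filter P (iota 0 L).
have sS : sorted ltn S by apply: sorted_filter; [exact: ltn_trans | exact: iota_ltn_sorted].
have memS i : (i \in S) = P i && (i < L) by rewrite mem_filter mem_iota.
have S0 : 0 \in S by rewrite memS P0.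
exists (size S), (nth L S); split; [split|].
- by case: (S) S0.
- rewrite /S (_ : iota 0 L = 0 :: iota 1 L.-1); last by case: (L) L0.
  by rewrite /= P0.
- by rewrite nth_default.
- move=> j jm; case: (ltnP j.+1 (size S)) => h.
  + exact: (sorted_ltn_nth ltn_trans L sS).
  + rewrite (nth_default L h); have := mem_nth L jm; rewrite memS; case/andP=> _ H; exact: H.
- move=> j jm; have := mem_nth L jm; rewrite memS; case/andP=> H _; exact: H.
- move=> i iL Pi; have iS : i \in S by rewrite memS Pi.
  by exists (index i S); [rewrite index_mem | rewrite nth_index].
Qed.

Definition is_inl (A B : Type) (x : A + B) := if x is inl _ then true else false.

Lemma mod_small_contra L q d : 2 < L -> 0 < d < 3 -> (q + d) %% L = q %% L -> False.
Proof.
move=> L3 d3 /eqP; rewrite -{2}(addn0 q) eqn_modDl mod0n modn_small; last lia.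
move/eqP; lia.
Qed.

Lemma modL_inj L a b : 0 < a <= L -> 0 < b <= L -> a %% L = b %% L -> a = b.
Proof.
move=> ha hb.
have ma : a %% L = if a == L then 0 else a.
  by case: eqP => [->|?]; [rewrite modnn | rewrite modn_small; lia].
have mb : b %% L = if b == L then 0 else b.
  by case: eqP => [->|?]; [rewrite modnn | rewrite modn_small; lia].
rewrite ma mb; case: eqP; case: eqP; lia.
Qed.

Lemma modS_helper i l : (i %% l).+1 %% l = i.+1 %% l.
Proof. by rewrite -addn1 modnDml addn1. Qed.

Lemma step_girth g (T0 : finType) (e0 : rel T0) (V E : finType) (edge : E -> {set V})
  (lam : E -> V -> T0) (T : finType) (e : rel T) (f : T -> V + (E * T0)) :
  girth_ge e0 g -> hgirth_ge edge ((g + 2) %/ 3) -> labels_bijective edge lam ->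
  bijective f ->
  (forall x y, e x y = step_graph e0 edge lam (f x) (f y)) -> girth_ge e g.
Proof.
move=> IH hg hlab fbij he l c l3 cinj cadj.
case: (leqP g l) => // lg; exfalso.
have l0 : 0 < l by lia.
set G := step_graph e0 edge lam.
pose om i : 'I_l := Ordinal (ltn_pmod i l0).
pose D0 i := f (c (om i)).
have D0mod i : D0 (i %% l) = D0 i.
  by rewrite /D0; congr (f (c _)); apply: val_inj; rewrite /= modn_mod.
have D0adj i : G (D0 i) (D0 i.+1).
  rewrite /G /D0 -he.
  have -> : om i.+1 = ordS (om i).
    by apply: val_inj => /=; rewrite modS_helper.
  exact: cadj.
have D0inj i j : D0 i = D0 j -> i %% l = j %% l.
  by rewrite /D0 => /(bij_inj fbij) /cinj /(congr1 val).
have ordSv (i : 'I_l) : D0 (ordS i) = D0 i.+1 by rewrite D0mod.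
have D0ord (i : 'I_l) : D0 i = f (c i).
  by rewrite /D0; congr (f (c _)); apply: val_inj; rewrite /= modn_small.
case: (boolP [exists i : 'I_l, is_inl (D0 i)]) => [/existsP [r Dr] | /existsPn noinl].
2:{
  have noinl' i : ~~ is_inl (D0 i) by rewrite -D0mod; exact: (noinl (om i)).
  case E0: (D0 0) => [v|[F0 a0]]; first by have := noinl' 0; rewrite E0.
  have allF i : exists a, D0 i = inr (F0, a).
    elim: i => [|i [a Ei]]; first by exists a0.
    have := D0adj i; rewrite Ei; have := noinl' i.+1.
    case: (D0 i.+1) => [//|[F' b]] _ /= /andP[/eqP <- _]; by exists b.
  pose cn i := if D0 i is inr (_, a) then a else a0.
  have cE i : D0 i = inr (F0, cn i) by have [a Ea] := allF i; rewrite /cn Ea.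
  suff : g <= l by rewrite leqNgt lg.
  apply: (IH l (fun i : 'I_l => cn i) l3).
  - move=> i j /= hij; apply: val_inj.
    have := D0inj i j; rewrite (cE i) (cE j) hij => /(_ erefl).
    by rewrite !modn_small.
  - move=> i /=; have := D0adj i; rewrite -ordSv (cE i) (cE (ordS i)) /= eqxx.
    by [].
}
pose D i := D0 (i + r).
have Dadj i : G (D i) (D i.+1) by rewrite /D addSn; exact: D0adj.
have Dinj i j : D i = D j -> i %% l = j %% l.
  by move/D0inj/eqP; rewrite eqn_modDr => /eqP.
have Dper i : D (i + l) = D i by rewrite /D -D0mod addnAC modnDr D0mod.
have Dr' : is_inl (D 0) by rewrite /D add0n.
case D0E: (D 0) (Dr') => [v0|] // _.
case D1E : (D 1) => [?|[F1 a1]]; first by have := Dadj 0; rewrite D0E D1E.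
have Dr0 : is_inl (D 0) by rewrite D0E.
pose getV (x : V + (E * T0)) := if x is inl v then v else v0.
pose getF (x : V + (E * T0)) := if x is inr (F, _) then F else F1.
have [m [p [[m0 p0 pm pinc pP] pall]]] := @enum_positions (fun i => is_inl (D i)) l Dr0 l0.
have pmono a b : a < b <= m -> p a < p b.
  move=> /andP[ab bm]; elim: b ab bm => // b IHb; rewrite ltnS leq_eqVlt.
  case/orP=> [/eqP <- | ab] bm; first exact: pinc.
  exact: ltn_trans (IHb ab (ltnW bm)) (pinc b bm).
have pmono' a b : a <= b <= m -> p a <= p b.
  move=> /andP[ab bm]; case: (ltngtP a b) ab => // [h _|-> _ //].
  by apply: ltnW; apply: pmono; rewrite h.
have pL j : j <= m -> p j <= l by move=> jm; rewrite -pm; apply: pmono'; rewrite jm leqnn.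
have ppos j : 0 < j -> j <= m -> 0 < p j.
  by move=> j0 jm; rewrite -p0; apply: pmono; rewrite j0.
have pinl j : j <= m -> is_inl (D (p j)).
  rewrite leq_eqVlt => /orP[/eqP -> | jm]; last exact: pP.
  by rewrite pm -(add0n l) Dper.
have notinl j i : j < m -> p j < i < p j.+1 -> ~~ is_inl (D i).
  move=> jm /andP[h1 h2]; apply/negP => Di.
  have iL : i < l by have := pL j.+1 jm; lia.
  have [k km pk] := pall i iL Di.
  case: (leqP k j) => kj.
  - have : p k <= p j by apply: pmono'; rewrite kj ltnW.
    lia.
  - have : p j.+1 <= p k by apply: pmono'; rewrite kj ltnW.
    lia.
have gap2 j : j < m -> (p j).+1 < p j.+1.
  move=> jm; case: (ltngtP (p j).+1 (p j.+1)) => // h.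
  - have := pinc j jm; lia.
  - have := Dadj (p j); rewrite h; have := pinl j (ltnW jm); have := pinl j.+1 jm.
    by case: (D (p j)) => // ?; case: (D (p j.+1)).
pose Fj j := getF (D (p j).+1).
have seg j k : j < m -> p j + k.+1 < p j.+1 -> exists a, D (p j + k.+1) = inr (Fj j, a).
  move=> jm; elim: k => [|k IHk] hk.
  - have hh : p j < (p j).+1 < p j.+1 by apply/andP; split; lia.
    have := notinl j _ jm hh; rewrite addn1 /Fj; case: (D (p j).+1) => [//|[F a]] /= _.
    by exists a.
  - have [a Ea] := IHk ltac:(lia).
    have := Dadj (p j + k.+1); rewrite Ea -addnS; have := notinl j (p j + k.+2) jm ltac:(lia).
    case: (D (p j + k.+2)) => [//|[F b]] _ /= /andP[/eqP <- _]; by exists b.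
have xE j : j <= m -> D (p j) = inl (getV (D (p j))).
  by move=> jm; have := pinl j jm; case: (D (p j)).
pose x j := getV (D (p j.+1)).
have endseg j : j < m -> exists a, D (p j.+1).-1 = inr (Fj j, a).
  move=> jm; have g2 := gap2 j jm.
  have [a Ea] := seg j ((p j.+1) - (p j) - 2) jm ltac:(lia).
  exists a; rewrite -Ea; congr D; lia.
have wrapD j k : j < m -> D (p (j.+1 %% m) + k) = D (p j.+1 + k).
  move=> jm; case: (ltngtP j.+1 m) => h; [by rewrite modn_small | lia |].
  by rewrite h modnn p0 pm add0n addnC Dper.
have left j : j < m -> exists a,
    [/\ D (p j.+1).-1 = inr (Fj j, a), x j \in edge (Fj j) & lam (Fj j) (x j) = a].
  move=> jm; have [a Ea] := endseg j jm; exists a.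
  have := Dadj (p j.+1).-1; rewrite Ea prednK; last exact: ppos.
  rewrite (xE j.+1 jm) /= => /andP[h1 /eqP h2]; by split.
have right j : j < m -> exists b,
    [/\ D (p j.+1).+1 = inr (Fj (j.+1 %% m), b), x j \in edge (Fj (j.+1 %% m))
      & lam (Fj (j.+1 %% m)) (x j) = b].
  move=> jm; have jm' : j.+1 %% m < m by exact: ltn_pmod.
  have [b Eb] := seg (j.+1 %% m) 0 jm' ltac:(have := gap2 _ jm'; lia).
  rewrite wrapD // addn1 in Eb; exists b.
  have := Dadj (p j.+1); rewrite Eb (xE j.+1 jm) /= => /andP[h1 /eqP h2]; by split.
have Fne j : j < m -> Fj j != Fj (j.+1 %% m).
  move=> jm; apply/eqP => EF.
  have [a [Ea _ la]] := left j jm; have [b [Eb _ lb]] := right j jm.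
  rewrite -EF la in lb; rewrite -EF -lb in Eb; rewrite -Eb in Ea.
  have := Dinj _ _ Ea; have := ppos j.+1 isT jm => pp.
  rewrite -[(p j.+1).+1](_ : (p j.+1).-1 + 2 = _); last lia.
  move/esym; exact: mod_small_contra.
have xin j : j < m -> x j \in edge (Fj j) /\ x j \in edge (Fj (j.+1 %% m)).
  move=> jm; have [a [_ ? _]] := left j jm; have [b [_ ? _]] := right j jm; by split.
have xinj i j : i < m -> j < m -> x i = x j -> i = j.
  move=> im jm xij.
  have : D (p i.+1) = D (p j.+1) by rewrite (xE _ im) (xE _ jm) -/(x i) -/(x j) xij.
  move/Dinj/modL_inj => hh.
  have pij : p i.+1 = p j.+1.
    by apply: hh; apply/andP; split; [exact: ppos | exact: pL | exact: ppos | exact: pL].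
  case: (ltngtP i j) => // h.
  - have := pmono i.+1 j.+1; rewrite ltnS h jm pij ltnn; by move/(_ isT).
  - have := pmono j.+1 i.+1; rewrite ltnS h im pij ltnn; by move/(_ isT).
have gap3 j : j < m -> p j + 3 <= p j.+1.
  move=> jm; have g2 := gap2 j jm; case: (leqP (p j + 3) (p j.+1)) => // h.
  have e2 : p j.+1 = p j + 2 by lia.
  have [a Ea] := seg j 0 jm ltac:(lia).
  have := Dadj (p j); rewrite -addn1 Ea (xE j (ltnW jm)) /= => /andP[uF /eqP ua].
  have := Dadj (p j + 1); rewrite Ea -addnS -e2 (xE j.+1 jm) /= => /andP[wF /eqP wa].
  have uw := (hlab (Fj j)).1 _ _ uF wF (etrans ua (esym wa)).
  have : D (p j) = D (p j.+1) by rewrite (xE j (ltnW jm)) (xE j.+1 jm) uw.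
  rewrite e2 => /Dinj /esym H; exfalso; exact: (mod_small_contra l3 _ H).
have len j : j <= m -> 3 * j <= p j.
  elim: j => [|j IHj] jm; first by rewrite p0.
  have := gap3 j jm; have := IHj (ltnW jm); lia.
have := len m (leqnn m); rewrite pm => lm.
have := berge_extract hg m0 xinj Fne xin.
lia.
Qed.

Theorem lemma4p2 (g k : nat) : 0 < g -> 0 < k ->
  forall (T : finType) (e : rel T), constructed g k e -> girth_ge e g.
Proof.
move=> _ _ T e H; elim: H => {k T e}
  [T e T1 e0 | k T0 e0 V E edge lam T e f _ IH _ _ _ hg _ hlab fbij he].
- move=> l c l3 cinj _; have := @leq_card _ _ c cinj; rewrite card_ord T1; lia.
- exact: step_girth IH hg hlab fbij he.
Qed.
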